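(* Let $n\ge1$, $v>0$ a scalar and $\mathbf{b}$ a nonzero vector, held fixed, and for each $d\ge1$ let $h^*=\left(\frac{vd}{4n\|\mathbf{b}\|_2^2}\right)^{1/(d+4)}$ and $\operatorname{LOMSE}(h,n,d)=h^4\|\mathbf{b}\|_2^2+\frac{v}{nh^d}$. Then in high-dimensional action spaces the squared leading-order bias $(h^* )^4\|\mathbf{b}\|_2^2$ dominates the leading-order variance $\frac{v}{n(h^* )^d}$, in the sense that their ratio tends to $\infty$ as $d\to\infty$; furthermore $\operatorname{LOMSE}(h^*,n,d)\to\|\mathbf{b}\|_2^2$ as $d\to\infty$, i.e. $\operatorname{LOMSE}(h^*,n,d)$ approximates $\|\mathbf{b}\|_2^2$.
   Context: In the paper, $d$ is the action dimension, $h^*$ the optimal kernel bandwidth minimizing the leading-order MSE $\operatorname{LOMSE}$ of a kernel-relaxed importance-resampling estimate of a TD update vector, $\mathbf{b}$ the bias constant vector, $v$ the variance constant and $n$ the data size; the statement treats $\mathbf{b},v,n$ as fixed while $d$ grows. *)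

(* Defs.v *)
From HB Require Import structures.
From mathcomp Require Import all_boot all_order all_algebra.
From mathcomp Require Import all_classical all_reals all_analysis.
Set Implicit Arguments. Unset Strict Implicit. Unset Printing Implicit Defensive.
Import Order.TTheory GRing.Theory Num.Theory.
Local Open Scope ring_scope.

Definition sqnorm2 (R : realType) (m : nat) (b : 'rV[R]_m) : R :=
  \sum_(i < m) (b ord0 i) ^+ 2.

Definition hstar (R : realType) (m : nat) (b : 'rV[R]_m) (v : R) (n d : nat) : R :=
  powR ((v * d%:R) / (4 * n%:R * sqnorm2 b)) (d.+4%:R^-1).

Definition LObias2 (R : realType) (m : nat) (b : 'rV[R]_m) (h : R) : R :=
  h ^+ 4 * sqnorm2 b.

Definition LOvar (R : realType) (v h : R) (n d : nat) : R :=
  v / (n%:R * h ^+ d).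

Definition LOMSE (R : realType) (m : nat) (b : 'rV[R]_m) (v h : R) (n d : nat) : R :=
  LObias2 b h + LOvar v h n d.

(* Main.v *)
Require Import Defs.
From HB Require Import structures.
From mathcomp Require Import all_boot all_order all_algebra.
From mathcomp Require Import all_classical all_reals all_analysis.
From mathcomp Require Import ring lra.
Import Order.TTheory GRing.Theory Num.Theory.
Import numFieldNormedType.Exports.
Local Open Scope classical_set_scope.
Local Open Scope ring_scope.

Section S.
Variable R : realType.

Lemma L1 : (fun d : nat => (d%:R : R)^-1) @ \oo --> 0.
Proof.
rewrite -(cvg_shiftS (fun d : nat => (d%:R : R)^-1)).
exact: (@cvg_harmonic R).
Qed.

Lemma L2 : (fun d : nat => Num.sqrt ((d%:R : R)^-1)) @ \oo --> 0.
Proof.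
rewrite -sqrtr0.
exact: (continuous_cvg _ (@sqrt_continuous R 0) L1).
Qed.

Lemma L3 : (fun d : nat => ln (d%:R : R) / d%:R) @ \oo --> 0.
Proof.
apply: (@squeeze_cvgr _ _ _ _ (fun=> 0) (fun d : nat => 2 * Num.sqrt ((d%:R : R)^-1))).
- near=> d.
  have d1 : (1 <= (d%:R : R)) by rewrite ler1n; near: d; exact: nbhs_infty_gt.
  have d0 : (0 < (d%:R : R)) by apply: lt_le_trans d1.
  apply/andP; split.
    by rewrite divr_ge0 ?ln_ge0 ?(ltW d0).
  have s0 : 0 < Num.sqrt (d%:R : R) by rewrite sqrtr_gt0.
  rewrite -{1}(sqr_sqrtr (ltW d0)) lnXn // sqrtrV ?(ltW d0) //.
  rewrite -{2}(sqr_sqrtr (ltW d0)) expr2 mulr2n.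
  have := ln_sublinear s0 => H.
  rewrite ler_pdivrMr ?mulr_gt0 //.
  rewrite mulrA mulfVK ?gt_eqF // mulr_natl.
  by rewrite mulr2n lerD // ltW.
- exact: cvg_cst.
- rewrite -(mulr0 2); apply: cvgM; [exact: cvg_cst | exact: L2].
Unshelve. all: by end_near.
Qed.

Lemma sq0 (f g : nat -> R) : (\forall d \near \oo, 0 <= f d <= g d) ->
  g @ \oo --> 0 -> f @ \oo --> 0.
Proof. move=> H; exact: (squeeze_cvgr H (cvg_cst 0)). Qed.

Lemma L4 (c : R) : 0 < c ->
  (fun d : nat => ((d.+4%:R : R)^-1 * 4) * ln (c * d%:R)) @ \oo --> 0.
Proof.
move=> c0.
have Hinv : (fun d : nat => (d.+4%:R : R)^-1) @ \oo --> 0.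
  apply: sq0 L1; near=> d.
  have d1 : (1 <= (d%:R : R)) by rewrite ler1n; near: d; exact: nbhs_infty_gt.
  have d0 : (0 < (d%:R : R)) by apply: lt_le_trans d1.
  rewrite invr_ge0 ler0n /= lef_pV2 ?posrE ?ltr0n //; last by rewrite -(ltr0n R).
  by rewrite -[d.+4]addn4 natrD lerDl ler0n.
have Hl : (fun d : nat => (d.+4%:R : R)^-1 * ln (d%:R)) @ \oo --> 0.
  apply: sq0 L3; near=> d.
  have d1 : (1 <= (d%:R : R)) by rewrite ler1n; near: d; exact: nbhs_infty_gt.
  have d0 : (0 < (d%:R : R)) by apply: lt_le_trans d1.
  rewrite mulr_ge0 ?invr_ge0 ?ler0n ?ln_ge0 //= mulrC ler_wpM2l ?ln_ge0 //.
  rewrite lef_pV2 ?posrE ?ltr0n //; last by rewrite -(ltr0n R).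
  by rewrite -[d.+4]addn4 natrD lerDl ler0n.
have E : \forall d \near \oo, (4 * ((d.+4%:R : R)^-1 * ln c + (d.+4%:R : R)^-1 * ln (d%:R))) =
   ((d.+4%:R : R)^-1 * 4) * ln (c * d%:R).
  near=> d.
  have d1 : (1 <= (d%:R : R)) by rewrite ler1n; near: d; exact: nbhs_infty_gt.
  have d0 : (0 < (d%:R : R)) by apply: lt_le_trans d1.
  rewrite lnM ?posrE //; ring.
apply: cvg_trans (near_eq_cvg E) _.
rewrite -(mulr0 4); apply: cvgM; first exact: cvg_cst.
rewrite -(addr0 0); apply: cvgD; last exact: Hl.
rewrite -(mul0r (ln c)); apply: cvgM => //; exact: cvg_cst.
Unshelve. all: by end_near.
Qed.

Lemma Bpos (m : nat) (b : 'rV[R]_m) : b != 0 -> 0 < sqnorm2 b.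
Proof.
move=> b0; rewrite lt_def sumr_ge0 ?andbT; last by move=> i _; exact: sqr_ge0.
apply: contra b0 => /eqP H; apply/eqP/matrixP => i j.
rewrite !mxE (ord1 i).
have := @psumr_eq0P R _ predT (fun k : 'I_m => b ord0 k ^+ 2) (fun k _ => sqr_ge0 _) H j isT.
by move/eqP; rewrite sqrf_eq0 => /eqP.
Qed.

Lemma hpow (m : nat) (b : 'rV[R]_m) (v : R) (n d : nat) :
  0 < (v * d%:R) / (4 * n%:R * sqnorm2 b) ->
  hstar b v n d ^+ d * hstar b v n d ^+ 4 = (v * d%:R) / (4 * n%:R * sqnorm2 b) /\
  hstar b v n d ^+ 4 = expR ((d.+4%:R^-1 * 4) * ln ((v * d%:R) / (4 * n%:R * sqnorm2 b))).
Proof.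
move=> a0; rewrite /hstar; set a := _ / _ in a0 *.
split.
  rewrite -exprD addn4 -powR_mulrn ?powR_ge0 // -powRrM mulVf ?powRr1 ?ltW //.
rewrite -powR_mulrn ?powR_ge0 // -powRrM /powR gt_eqF //.
Qed.
End S.

Theorem proposition2 (R : realType) (m n : nat) (v : R) (b : 'rV[R]_m) :
  (1 <= n)%N -> 0 < v -> b != 0 ->
  ((fun d : nat => LObias2 b (hstar b v n d) / LOvar v (hstar b v n d) n d)
     @ \oo --> +oo) /\
  ((fun d : nat => LOMSE b v (hstar b v n d) n d) @ \oo --> sqnorm2 b).
Proof.
move=> n1 v0 b0.
have B0 := @Bpos R _ b b0.
set B := sqnorm2 b in B0 *.
have n0 : (0 < (n%:R : R)) by rewrite ltr0n.
set c := v / (4 * n%:R * B).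
have c0 : 0 < c by rewrite divr_gt0 // !mulr_gt0.
have key : \forall d \near \oo, (1 <= (d%:R : R)) /\
   hstar b v n d ^+ d * hstar b v n d ^+ 4 = c * d%:R /\
   hstar b v n d ^+ 4 = expR ((d.+4%:R^-1 * 4) * ln (c * d%:R)).
  near=> d.
  have d1 : (1 <= (d%:R : R)) by rewrite ler1n; near: d; exact: nbhs_infty_gt.
  have d0 : (0 < (d%:R : R)) by apply: lt_le_trans d1.
  have ce : c * d%:R = (v * d%:R) / (4 * n%:R * B) by rewrite /c mulrAC.
  rewrite ce; split => //; apply: hpow; rewrite -ce mulr_gt0 //.
have h4 : (fun d : nat => hstar b v n d ^+ 4) @ \oo --> (1 : R).
  have E : \forall d \near \oo, expR ((d.+4%:R^-1 * 4) * ln (c * d%:R)) = hstar b v n d ^+ 4.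
    by near=> d; have /(_ _)[//|_ [_ ->]] := near key d.
  apply: cvg_trans (near_eq_cvg E) _.
  have H := @continuous_cvg _ _ _ _ _ _ (@expR R) 0 (@continuous_expR R 0) (@L4 R c c0).
  rewrite expR0 in H; exact: H.
split.
  apply/cvgryPge => A.
  have HA := (cvgryPge _).1 (@cvgr_idn R) (4 * A).
  near=> d.
  have /(_ _)[//|d1 [e1 _]] := near key d.
  have d0 : (0 < (d%:R : R)) by apply: lt_le_trans d1.
  set h := hstar b v n d in e1 *.
  have h0 : h != 0.
    apply/negP => /eqP h0; move: e1; rewrite h0 [0 ^+ 4]expr0n mulr0 => /esym/eqP.
    by rewrite mulf_eq0 (gt_eqF c0) (gt_eqF d0).
  have -> : LObias2 b h / LOvar v h n d = d%:R / 4.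
    rewrite /LObias2 /LOvar -/B.
    have hd : h ^+ d = c * d%:R / h ^+ 4 by rewrite -e1 mulfK // expf_neq0.
    rewrite hd /c; field.
    by rewrite h0 !gt_eqF.
  rewrite ler_pdivlMr //; rewrite mulrC; near: d; exact: HA.
have E : \forall d \near \oo, B * hstar b v n d ^+ 4 * (1 + 4 * (d%:R : R)^-1) =
    LOMSE b v (hstar b v n d) n d.
  near=> d.
  have /(_ _)[//|d1 [e1 _]] := near key d.
  have d0 : (0 < (d%:R : R)) by apply: lt_le_trans d1.
  set h := hstar b v n d in e1 *.
  have h0 : h != 0.
    apply/negP => /eqP h0; move: e1; rewrite h0 [0 ^+ 4]expr0n mulr0 => /esym/eqP.
    by rewrite mulf_eq0 (gt_eqF c0) (gt_eqF d0).
  rewrite /LOMSE /LObias2 /LOvar -/B.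
  have hd : h ^+ d = c * d%:R / h ^+ 4 by rewrite -e1 mulfK // expf_neq0.
  rewrite hd /c; field.
  by rewrite h0 !gt_eqF.
apply: cvg_trans (near_eq_cvg E) _.
suff H : (fun d : nat => B * hstar b v n d ^+ 4 * (1 + 4 * (d%:R : R)^-1)) @ \oo --> B * 1 * (1 + 4 * 0).
  by rewrite mulr0 addr0 !mulr1 in H.
apply: cvgM; first (apply: cvgM => //; exact: cvg_cst).
apply: cvgD; first exact: cvg_cst.
apply: cvgM; [exact: cvg_cst | exact: L1].

Unshelve. all: by end_near.
Qed.
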